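(* Let $k,n,t$ be positive integers. If $\pi$ is chosen uniformly at random from $NC^k(n)$, the expected number of blocks of $\pi$ of size $tk$ is $$\frac{(nk+1)\binom{n(k+1)-t-1}{nk-1}}{\binom{(k+1)n}{n}}.$$
   Context: A partition $\pi$ of $[N]=\{1,\dots,N\}$ is non-crossing if there are no $1\le a<b<c<d\le N$ with $a,c$ in one block and $b,d$ in another. $NC^k(n)$ is the set of non-crossing partitions of $[kn]$ all of whose blocks have size divisible by $k$. $\binom{a}{b}=\frac{a!}{b!(a-b)!}$ if $0\le b\le a$ and $0$ otherwise. *)

(* Defs.v *)
From HB Require Import structures.
From mathcomp Require Import all_boot all_order all_algebra.
Set Implicit Arguments. Unset Strict Implicit. Unset Printing Implicit Defensive.
Import Order.TTheory GRing.Theory Num.Theory.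

(* The ground set [N] = {1,...,N} is represented by 'I_N = {0,...,N-1},
   with the order-preserving bijection i <-> i+1. *)

Definition is_set_partition (N : nat) (P : {set {set 'I_N}}) : bool :=
  partition P [set: 'I_N].

Definition noncrossing (N : nat) (P : {set {set 'I_N}}) : bool :=
  [forall B1 in P, forall B2 in P, (B1 != B2) ==>
     [forall a : 'I_N, forall b : 'I_N, forall c : 'I_N, forall d : 'I_N,
        ~~ [&& (a < b)%N, (b < c)%N, (c < d)%N,
               a \in B1, c \in B1, b \in B2 & d \in B2]]].

Definition NCk (k n : nat) : {set {set {set 'I_(k * n)}}} :=
  [set P | [&& is_set_partition P, noncrossing P &
              [forall B in P, k %| #|B|]]].

Definition nblocks_of_size (N m : nat) (P : {set {set 'I_N}}) : nat :=
  #|[set B in P | #|B| == m]|.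

Definition binomZ (a b : int) : nat :=
  if (0 <= b)%R && (b <= a)%R then 'C(`|a|%N, `|b|%N) else 0.

(* Main.v *)
Require Import Defs.
From HB Require Import structures.
From mathcomp Require Import all_boot all_order all_algebra zify ring.
Import Order.TTheory GRing.Theory Num.Theory.
Set Implicit Arguments. Unset Strict Implicit. Unset Printing Implicit Defensive.

Definition fcons (T : Type) (M : nat) (a : T) (g : {ffun 'I_M -> T}) : {ffun 'I_M.+1 -> T} :=
  [ffun i => if unlift ord0 i is Some j then g j else a].

Lemma sum_ffunS (T : finType) (M : nat) (F : {ffun 'I_M.+1 -> T} -> nat) :
  \sum_(f : {ffun 'I_M.+1 -> T}) F f = \sum_(a : T) \sum_(g : {ffun 'I_M -> T}) F (fcons a g).
Proof.
rewrite pair_big /=.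
pose h (p : T * {ffun 'I_M -> T}) := fcons p.1 p.2.
pose h' (f : {ffun 'I_M.+1 -> T}) := (f ord0, [ffun j => f (lift ord0 j)]).
have hK : cancel h' h.
  move=> f; apply/ffunP => i; rewrite /h /h' /fcons !ffunE /=.
  by case: unliftP => [j ->|->]; rewrite ?ffunE.
have h'K : cancel h h'.
  move=> [a g]; rewrite /h /h' /fcons /= ffunE unlift_none; congr pair.
  by apply/ffunP => j; rewrite !ffunE liftK.
rewrite (reindex h) //; exists h' => ? _; [exact: h'K | exact: hK].
Qed.

Lemma sum_fcons (M B : nat) (a : 'I_B) (g : {ffun 'I_M -> 'I_B}) :
  \sum_(i < M.+1) (fcons a g i : nat) = a + \sum_(i < M) (g i : nat).
Proof.
rewrite big_ord_recl /fcons ffunE unlift_none; congr addn.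
by apply: eq_bigr => j _; rewrite ffunE liftK.
Qed.

Definition comp (B M m : nat) : nat :=
  \sum_(c : {ffun 'I_M -> 'I_B}) (\sum_(i < M) (c i : nat) == m).

Lemma compS B M m : comp B M.+1 m = \sum_(a < B) (a <= m) * comp B M (m - a).
Proof.
rewrite /comp sum_ffunS; apply: eq_bigr => a _.
rewrite big_distrr /=; apply: eq_bigr => g _; rewrite sum_fcons.
case: (leqP a m) => h /=; last by rewrite mul0n; apply/eqP; rewrite eqb0; lia.
by rewrite mul1n; congr nat_of_bool; apply/eqP/eqP; lia.
Qed.

Lemma comp0 B m : comp B 0 m = (m == 0).
Proof.
rewrite /comp (eq_bigr (fun _ => (0 == m) : nat)); last by move=> c _; rewrite big_ord0.
rewrite sum_nat_const card_ffun card_ord.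
by rewrite card_ord expn0 mul1n; case: m.
Qed.

Lemma hockey M m :
  \sum_(a < m.+1) 'C(m - a + M, m - a) = 'C(m + M.+1, m).
Proof.
elim: m => [|m IH]; first by rewrite big_ord1 !bin0.
rewrite big_ord_recl subn0.
rewrite (eq_bigr (fun a : 'I_m.+1 => 'C(m - a + M, m - a))); last first.
  by move=> a _; rewrite /bump /= subSS.
rewrite IH.
have -> : m.+1 + M.+1 = (m.+1 + M).+1 by lia.
have -> : m + M.+1 = m.+1 + M by lia.
by rewrite binS addnC.
Qed.

Lemma sum_le_widen B m (G : nat -> nat) : m < B ->
  \sum_(a < B) (a <= m) * G a = \sum_(a < m.+1) G a.
Proof.
move=> hm; rewrite (big_ord_widen _ G hm) [RHS]big_mkcond /=.
by apply: eq_bigr => a _; rewrite ltnS; case: (a <= m); rewrite ?mul1n ?mul0n.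
Qed.

Lemma compE B M m : m < B -> comp B M.+1 m = 'C(m + M, m).
Proof.
elim: M m => [|M IH] m hm.
  rewrite compS (sum_le_widen (fun a => comp B 0 (m - a)) hm) addn0 binn.
  rewrite big_ord_recr /= subnn comp0 /= big1 // => a _.
  by rewrite comp0; apply/eqP; rewrite eqb0; have := ltn_ord a; lia.
rewrite compS (sum_le_widen (fun a => comp B M.+1 (m - a)) hm).
rewrite -hockey; apply: eq_bigr => a _; rewrite IH //; lia.
Qed.

Definition goodV (V : nat -> nat) (N r : nat) : bool :=
  [forall m : 'I_N.+1, V r + m <= V (r + m)].

Lemma key_lt (L a b x y : nat) : x < L -> y < L -> L * a + x <= L * b + y ->
  a < b \/ (a = b /\ x <= y).
Proof.
move=> hx hy h; case: (ltngtP a b) => hab; [by left| |right; split => //; subst; lia].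
exfalso; have : L * (b.+1) <= L * a by apply: leq_mul.
rewrite mulnS; lia.
Qed.

Lemma cycle_unique (V : nat -> nat) N (hper : forall j, V (j + N.+1) = V j + N) r r' :
  r < N.+1 -> r' < N.+1 -> goodV V N r -> goodV V N r' -> r = r'.
Proof.
wlog: r r' / r <= r'.
  move=> W hr hr' g g'; case: (leqP r r') => h; first exact: W.
  by apply/esym/W => //; apply: ltnW.
move=> le hr hr' /forallP g /forallP g'.
case: (ltngtP r r') le => // lt _.
have h1 := g (Ordinal (_ : r' - r < N.+1)); have := h1 ltac:(lia).
have h2 := g' (Ordinal (_ : r + N.+1 - r' < N.+1)); have := h2 ltac:(lia).
move=> /= A1 A2.
have e1 : r + (r' - r) = r' by lia.
have e2 : r' + (r + N.+1 - r') = r + N.+1 by lia.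
rewrite e1 in A2; rewrite e2 hper in A1; lia.
Qed.

Lemma cycle_exists (V : nat -> nat) N (hper : forall j, V (j + N.+1) = V j + N) :
  exists2 r, r < N.+1 & goodV V N r.
Proof.
pose key (j : 'I_N.+1) := N.+1 * (V j + N.+1 - j) + j.
case: (@arg_minnP _ ord0 xpredT key isT) => r _ hmin.
exists r => //; apply/forallP => m.
case: (ltnP (r + m) N.+1) => hrm.
  have := hmin (Ordinal hrm) isT; rewrite /key /= => h.
  case: (key_lt (ltn_ord r) hrm h); lia.
have hj : r + m - N.+1 < N.+1 by have := ltn_ord m; have := ltn_ord r; lia.
have := hmin (Ordinal hj) isT; rewrite /key /= => h.
have e : r + m = (r + m - N.+1) + N.+1 by lia.
rewrite e hper.
case: (key_lt (ltn_ord r) hj h) => [|[]]; first lia.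
move=> _ hh; have := ltn_ord m; lia.
Qed.

Lemma sum_shift (F : nat -> nat) a b :
  \sum_(0 <= i < a + b) F i = \sum_(0 <= i < a) F i + \sum_(0 <= i < b) F (i + a).
Proof.
rewrite (big_cat_nat (leq0n a) (leq_addr b a)); congr addn.
by rewrite -{1}(add0n a) big_addn addKn.
Qed.

Definition rotI (N r : nat) (i : 'I_N.+1) : 'I_N.+1 := inord ((i + r) %% N.+1).
Definition rot (T : Type) (N r : nat) (c : {ffun 'I_N.+1 -> T}) : {ffun 'I_N.+1 -> T} :=
  [ffun i => c (@rotI N r i)].

Lemma rotI_val N r (i : 'I_N.+1) : (rotI r i : nat) = (i + r) %% N.+1.
Proof. by rewrite /rotI inordK // ltn_pmod. Qed.

Lemma rotI_inj N r : injective (@rotI N r).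
Proof.
move=> i j /(congr1 val) /=; rewrite !rotI_val => /eqP; rewrite eqn_modDr.
by rewrite !modn_small // => /eqP /val_inj.
Qed.

Lemma rot_inj (T : Type) N r : injective (@rot T N r).
Proof.
move=> c d e; apply/ffunP => i.
have := f_invF (@rotI_inj N r) i => <-.
by have := congr1 (fun f : {ffun _ -> T} => f (invF (@rotI_inj N r) i)) e; rewrite /= !ffunE.
Qed.

Lemma sum_rotI N r (F : 'I_N.+1 -> nat) : \sum_i F (rotI r i) = \sum_i F i.
Proof. by rewrite [RHS](reindex_inj (@rotI_inj N r)). Qed.

Definition Vc (k N B : nat) (c : {ffun 'I_N.+1 -> 'I_B}) (j : nat) : nat :=
  \sum_(0 <= i < j) k * c (inord (i %% N.+1)).

Definition pre (k N B : nat) (d : {ffun 'I_N.+1 -> 'I_B}) (m : nat) : nat :=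
  \sum_(i < N.+1 | i < m) k * d i.

Definition goodc (k N B : nat) (d : {ffun 'I_N.+1 -> 'I_B}) : bool :=
  [forall m : 'I_N.+1, m <= pre k d m].

Definition inU (n N B : nat) (c : {ffun 'I_N.+1 -> 'I_B}) : bool :=
  \sum_i (c i : nat) == n.

Lemma VcL k N B (c : {ffun 'I_N.+1 -> 'I_B}) :
  Vc k c N.+1 = k * \sum_i (c i : nat).
Proof.
rewrite /Vc big_mkord big_distrr; apply: eq_bigr => i _.
by rewrite modn_small // inord_val.
Qed.

Lemma Vc_per k n N B (c : {ffun 'I_N.+1 -> 'I_B}) : inU n c -> k * n = N ->
  forall j, Vc k c (j + N.+1) = Vc k c j + N.
Proof.
move=> /eqP hU hN j; rewrite addnC /Vc sum_shift.
have := VcL k c; rewrite /Vc hU hN => ->; rewrite addnC; congr addn.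
by apply: eq_bigr => i _; rewrite modnDr.
Qed.

Lemma pre_rot k N B (c : {ffun 'I_N.+1 -> 'I_B}) r m : m <= N.+1 ->
  pre k (rot r c) m + Vc k c r = Vc k c (r + m).
Proof.
move=> hm; rewrite /Vc sum_shift addnC; congr addn.
rewrite /pre (eq_bigr (fun i : 'I_N.+1 => k * c (inord ((i + r) %% N.+1)))); last first.
  by move=> i _; rewrite ffunE.
rewrite -(big_ord_widen _ (fun i => k * c (inord ((i + r) %% N.+1))) hm).
by rewrite big_mkord.
Qed.

Lemma good_rot k N B (c : {ffun 'I_N.+1 -> 'I_B}) (r : nat) :
  goodc k (rot r c) = goodV (Vc k c) N r.
Proof.
apply/forallP/forallP => h m; have := h m; have := pre_rot k c r (ltnW (ltn_ord m)); lia.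
Qed.

Lemma sum_good_rot k n N B (c : {ffun 'I_N.+1 -> 'I_B}) : inU n c -> k * n = N ->
  \sum_(r < N.+1) goodc k (rot r c) = 1.
Proof.
move=> hU hN; have hper := Vc_per hU hN.
case: (cycle_exists hper) => r0 hr0 g0.
rewrite (bigD1 (Ordinal hr0)) //= good_rot g0 big1 // => r hr.
rewrite good_rot; apply/eqP; rewrite eqb0; apply/negP => g.
move: hr; rewrite -val_eqE /= => /eqP; apply.
exact: (cycle_unique hper (ltn_ord r) hr0 g g0).
Qed.

Lemma inU_rot n N B (c : {ffun 'I_N.+1 -> 'I_B}) r : inU n (rot r c) = inU n c.
Proof.
rewrite /inU; congr (_ == _).
by rewrite -(sum_rotI r (fun i => (c i : nat))); apply: eq_bigr => i _; rewrite ffunE.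
Qed.

Lemma avg_lemma k n N B (F : {ffun 'I_N.+1 -> 'I_B} -> nat)
  (hF : forall r c, F (rot r c) = F c) : k * n = N ->
  N.+1 * \sum_(c | inU n c && goodc k c) F c = \sum_(c | inU n c) F c.
Proof.
move=> hN.
have -> : N.+1 * \sum_(c | inU n c && goodc k c) F c =
   \sum_(r < N.+1) \sum_(c | inU n c) goodc k (rot r c) * F c.
  rewrite -[X in X * _](card_ord N.+1) -sum_nat_const; apply: eq_bigr => r _.
  rewrite (reindex_inj (@rot_inj _ N r)) /= big_mkcondr /=.
  apply: eq_big => [c|c hc]; first by rewrite inU_rot.
  by rewrite hF; case: goodc; rewrite ?mul1n ?mul0n.
rewrite exchange_big /=; apply: eq_bigr => c hc.
by rewrite -big_distrl /= (sum_good_rot hc hN) mul1n.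
Qed.

Definition wt (t N B : nat) (c : {ffun 'I_N.+1 -> 'I_B}) : nat := \sum_i ((c i : nat) == t).

Lemma wt_rot t N B r (c : {ffun 'I_N.+1 -> 'I_B}) : wt t (rot r c) = wt t c.
Proof.
rewrite /wt -(sum_rotI r (fun i => ((c i : nat) == t) : nat)).
by apply: eq_bigr => i _; rewrite ffunE.
Qed.

Lemma rotI0 N (i : 'I_N.+1) : rotI i ord0 = i.
Proof. by apply: val_inj => /=; rewrite rotI_val /= add0n modn_small. Qed.

Lemma sum_wt t n N B :
  \sum_(c : {ffun 'I_N.+1 -> 'I_B} | inU n c) wt t c =
  N.+1 * \sum_(c : {ffun 'I_N.+1 -> 'I_B} | inU n c) ((c ord0 : nat) == t).
Proof.
rewrite /wt exchange_big /= -[X in X * _](card_ord N.+1) -sum_nat_const.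
apply: eq_bigr => i _.
rewrite [RHS](reindex_inj (@rot_inj _ N i)) /=.
apply: eq_big => [c|c _]; first by rewrite inU_rot.
by rewrite ffunE rotI0.
Qed.

Lemma sum_ord0 t n N :
  \sum_(c : {ffun 'I_N.+1 -> 'I_n.+1} | inU n c) ((c ord0 : nat) == t) =
  if t <= n then comp n.+1 N (n - t) else 0.
Proof.
rewrite big_mkcond /= sum_ffunS.
have E a g : (if inU n (fcons a g) then (((fcons a g) ord0 : nat) == t) : nat else 0)
    = ((a + \sum_i (g i : nat) == n) && ((a : nat) == t)).
  by rewrite /inU sum_fcons /fcons ffunE unlift_none; case: (_ == n).
under eq_bigr do under eq_bigr do rewrite E.
case: (leqP t n) => ht; last first.
  rewrite big1 // => a _; rewrite big1 // => g _.
  have -> : ((a : nat) == t) = false by apply/eqP => e; have := ltn_ord a; lia.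
  by rewrite andbF.
rewrite (bigD1 (Ordinal (_ : t < n.+1))) //= [X in _ + X]big1 ?addn0; last first.
  move=> a ha; apply: big1 => g _.
  have -> : ((a : nat) == t) = false.
    by apply/eqP => e; move: ha; rewrite -val_eqE /= e eqxx.
  by rewrite andbF.
rewrite /comp; apply: eq_bigr => g _; rewrite eqxx andbT; congr nat_of_bool.
by move: (\sum_(i < N) _) => s; rewrite -{1}(subnKC ht) eqn_add2l.
Qed.

Definition mn N (P : {set {set 'I_N}}) (x : 'I_N) : 'I_N :=
  fintype.arg_min x (fun y => y \in pblock P x) (fun y : 'I_N => (y : nat)).


Lemma part_cover N (P : {set {set 'I_N}}) x : partition P [set: 'I_N] -> x \in cover P.
Proof. by case/and3P => /eqP -> _ _; rewrite inE. Qed.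

Lemma part_triv N (P : {set {set 'I_N}}) : partition P [set: 'I_N] -> trivIset P.
Proof. by case/and3P. Qed.

Lemma pblock_self N (P : {set {set 'I_N}}) x : partition P [set: 'I_N] -> x \in pblock P x.
Proof. by move=> hP; rewrite mem_pblock part_cover. Qed.

Lemma mn_spec N (P : {set {set 'I_N}}) x : partition P [set: 'I_N] ->
  mn P x \in pblock P x /\ forall y, y \in pblock P x -> (mn P x <= y)%N.
Proof.
move=> hP; rewrite /mn; case: (@arg_minnP _ x (fun y => y \in pblock P x) (fun y : 'I_N => (y : nat)) (pblock_self x hP)).
by move=> i hi hmin; split.
Qed.

Lemma mn_in N (P : {set {set 'I_N}}) x : partition P [set: 'I_N] -> mn P x \in pblock P x.
Proof. by move=> hP; case: (mn_spec x hP). Qed.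

Lemma mn_le N (P : {set {set 'I_N}}) x y : partition P [set: 'I_N] ->
  y \in pblock P x -> (mn P x <= y)%N.
Proof. by move=> hP; case: (mn_spec x hP) => _; apply. Qed.

Lemma mn_lex N (P : {set {set 'I_N}}) x : partition P [set: 'I_N] -> (mn P x <= x)%N.
Proof. by move=> hP; apply: mn_le => //; apply: pblock_self. Qed.

Lemma pblock_eqE N (P : {set {set 'I_N}}) x y : partition P [set: 'I_N] ->
  (pblock P x == pblock P y) = (y \in pblock P x).
Proof. by move=> hP; rewrite eq_pblock ?part_triv ?part_cover. Qed.

Lemma pblock_mn N (P : {set {set 'I_N}}) x : partition P [set: 'I_N] ->
  pblock P (mn P x) = pblock P x.
Proof. by move=> hP; apply: same_pblock; [apply: part_triv | apply: mn_in]. Qed.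

Lemma mn_eq N (P : {set {set 'I_N}}) x y : partition P [set: 'I_N] ->
  (mn P x == mn P y) = (pblock P x == pblock P y).
Proof.
move=> hP; apply/eqP/eqP => [e|e].
  by rewrite -(pblock_mn x hP) e pblock_mn.
apply: val_inj; apply/eqP; rewrite eqn_leq; apply/andP; split.
  by apply: mn_le => //; rewrite e; apply: mn_in.
by apply: mn_le => //; rewrite -e; apply: mn_in.
Qed.

Lemma mn_idem N (P : {set {set 'I_N}}) x : partition P [set: 'I_N] -> mn P (mn P x) = mn P x.
Proof. by move=> hP; apply/eqP; rewrite mn_eq // pblock_mn. Qed.

Lemma mn_char N (P : {set {set 'I_N}}) x z : partition P [set: 'I_N] ->
  z \in pblock P x -> (forall y, y \in pblock P x -> (z <= y)%N) -> mn P x = z.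
Proof.
move=> hP hz hmin; apply: val_inj; apply/eqP; rewrite eqn_leq; apply/andP; split.
  exact: mn_le.
by apply: hmin; apply: mn_in.
Qed.

Lemma pblock_of_mem N (P : {set {set 'I_N}}) B x : partition P [set: 'I_N] ->
  B \in P -> x \in B -> pblock P x = B.
Proof. by move=> hP; apply: def_pblock; apply: part_triv. Qed.

Lemma card_sum (T : finType) (p : pred T) : #|[set x | p x]| = \sum_x (p x : nat).
Proof. by rewrite -sum1_card big_mkcond /=; apply: eq_bigr => x _; rewrite inE; case: (p x). Qed.

Lemma sum_eq_ord (a J : nat) : \sum_(j < J) (a == j : nat) = (a < J).
Proof.
elim: J => [|J IH]; first by rewrite big_ord0.
by rewrite big_ord_recr /= IH ltnS; case: (ltngtP a J).
Qed.

Lemma sum_cnt N (f : 'I_N -> nat) J :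
  \sum_(j < J) #|[set x | f x == j]| = #|[set x | f x < J]|.
Proof.
have E (p : pred 'I_N) : #|[set x | p x]| = \sum_x (p x : nat) by apply: card_sum.
rewrite E; transitivity (\sum_(j < J) \sum_x (f x == j : nat)).
  by apply: eq_bigr => j _; apply: card_sum.
by rewrite exchange_big /=; apply: eq_bigr => x _; rewrite sum_eq_ord.
Qed.

Definition sig (s : nat -> nat) (j : nat) : nat := \sum_(i < j) s i.
Definition hh (s : nat -> nat) (j : nat) : nat := sig s j - j.

Fixpoint flast (h : nat -> nat) (v i : nat) : nat :=
  match i with 0 => 0 | i'.+1 => if h i' < v then i' else flast h v i' end.

Definition lastlt (h : nat -> nat) (j : nat) : nat := flast h (h j) j.

Definition mm (s : nat -> nat) (x : nat) : nat := if 0 < s x then x else lastlt (hh s) x.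

Lemma sigS s j : sig s j.+1 = sig s j + s j.
Proof. by rewrite /sig big_ord_recr. Qed.

Lemma flast_spec h v i : (exists2 p, p < i & h p < v) ->
  [/\ flast h v i < i, h (flast h v i) < v & forall q, flast h v i < q < i -> v <= h q].
Proof.
elim: i => [[p]|i IH [p hp hpv]] //=.
case: ifP => hi.
  split => // q /andP[a b]; lia.
have hp' : p < i.
  case: (ltngtP p i) => // h1; first lia.
  by subst; rewrite hpv in hi.
case: (IH (ex_intro2 _ _ p hp' hpv)) => a b c; split => //; first lia.
move=> q /andP[q1 q2]; case: (ltngtP q i) => q3.
- by apply: c; rewrite q1.
- lia.
- by rewrite q3 leqNgt hi.
Qed.

Lemma lastlt_spec h j : (exists2 p, p < j & h p < h j) ->
  [/\ lastlt h j < j, h (lastlt h j) < h j & forall q, lastlt h j < q < j -> h j <= h q].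
Proof. exact: flast_spec. Qed.

Lemma lastlt_char h j p : p < j -> h p < h j -> (forall q, p < q < j -> h j <= h q) ->
  lastlt h j = p.
Proof.
move=> hpj hp hq; case: (lastlt_spec (ex_intro2 _ _ p hpj hp)) => a b c.
case: (ltngtP (lastlt h j) p) => // e.
- by have := c p; rewrite e hpj => /(_ isT); lia.
- by have := hq (lastlt h j); rewrite e a => /(_ isT); lia.
Qed.

Definition goodS N (s : nat -> nat) :=
  [/\ forall j, N <= j -> s j = 0, forall j, j <= N -> j <= sig s j & sig s N = N].

Lemma mm_down N s x : goodS N s -> x < N -> s x = 0 ->
  [/\ mm s x < x, hh s (mm s x) < hh s x & forall q, mm s x < q < x -> hh s x <= hh s q].
Proof.
move=> [g0 g1 g2] hx sx; rewrite /mm sx /=.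
apply: lastlt_spec; exists 0.
  case: x hx sx => // hx sx; have := g1 1 hx; rewrite sigS /sig big_ord0 sx; lia.
have := g1 x.+1 hx; rewrite sigS sx /hh /sig big_ord0; lia.
Qed.

Lemma mm_le N s x : goodS N s -> x < N -> mm s x <= x.
Proof.
move=> g hx; case: (posnP (s x)) => sx; first by case: (mm_down g hx sx) => a _ _; lia.
by rewrite /mm sx.
Qed.

Lemma mm_open N s x : goodS N s -> x < N -> 0 < s (mm s x).
Proof.
move=> g hx; case: (posnP (s x)) => sx; last by rewrite /mm sx /= sx.
have [g0 g1 g2] := g.
case: (mm_down g hx sx) => a b c; set r := mm s x in a b c *.
have h1 : hh s x <= hh s r.+1.
  case: (ltngtP r.+1 x) => e; [by apply: c; rewrite e ltnSn | lia | by rewrite e].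
have h2 := g1 r (ltnW (ltn_trans a hx)).
move: b h1; rewrite /hh sigS; lia.
Qed.

Lemma mm_idem N s x : goodS N s -> x < N -> mm s (mm s x) = mm s x.
Proof. by move=> g hx; rewrite {1}/mm (mm_open g hx). Qed.

Lemma fiber_le N s p : goodS N s -> p < N -> #|[set x : 'I_N | mm s x == p]| <= s p.
Proof.
move=> g hp; have [g0 g1 g2] := g.
case: (posnP (s p)) => sp.
  rewrite sp leqn0 cards_eq0; apply/eqP/setP => x; rewrite !inE.
  apply/negbTE/eqP => e; have := mm_open g (ltn_ord x); rewrite e sp //.
set F := [set x : 'I_N | mm s x == p].
rewrite (cardsD1 (Ordinal hp)).
set D := F :\ Ordinal hp.
have hD x : x \in D -> [/\ s x = 0, p < x, hh s p < hh s x & forall q, p < q < x -> hh s x <= hh s q].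
  rewrite !inE -val_eqE /= => /andP[xp /eqP e].
  have sx : s x = 0.
    apply/eqP; apply: contraR xp; rewrite -lt0n => sx; by rewrite -e /mm sx.
  by case: (mm_down g (ltn_ord x) sx); rewrite e => a b c; split.
have hrange x : x \in D -> hh s p < hh s x <= hh s p + (s p - 1).
  move=> /hD [sx a b c]; rewrite b /=.
  have e1 : hh s p.+1 = hh s p + (s p - 1).
    have := g1 p (ltnW hp); rewrite /hh sigS; lia.
  rewrite -e1; case: (ltngtP p.+1 x) => e; [by apply: c; rewrite e ltnSn | lia | by rewrite e].
have hdec x y : x \in D -> y \in D -> x < y -> hh s y < hh s x.
  move=> /hD [sx a b c] /hD [sy a' b' c'] xy.
  have e1 : hh s x.+1 = hh s x - 1.
    have := g1 x.+1 (ltn_ord x); rewrite /hh sigS sx; lia.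
  have : hh s y <= hh s x.+1.
    case: (ltngtP x.+1 y) => e; [by apply: c'; rewrite e andbT; lia | lia | by rewrite e].
  lia.
have hinj : {in D &, injective (fun x : 'I_N => hh s x)}.
  move=> x y hx hy e; apply: val_inj => /=.
  case: (ltngtP x y) => // xy; [have := hdec _ _ hx hy xy | have := hdec _ _ hy hx xy]; lia.
have : size (map (fun x : 'I_N => hh s x) (enum D)) <= size (iota (hh s p).+1 (s p - 1)).
  apply: uniq_leq_size.
    rewrite map_inj_in_uniq ?enum_uniq // => x y; rewrite !mem_enum; exact: hinj.
  move=> v /mapP [x]; rewrite mem_enum => hx ->; rewrite mem_iota.
  have := hrange x hx; lia.
rewrite size_map size_iota -cardE.
have : (Ordinal hp \in F) <= 1 by case: (_ \in F).
lia.
Qed.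

Lemma fiber_eq N s p : goodS N s -> p < N -> #|[set x : 'I_N | mm s x == p]| = s p.
Proof.
move=> g hp; have [g0 g1 g2] := g.
have hsum : \sum_(q < N) #|[set x : 'I_N | mm s x == q]| = \sum_(q < N) s q.
  rewrite (sum_cnt (fun x : 'I_N => mm s x)) -/(sig s N) g2.
  rewrite -[RHS](card_ord N) -cardsT; apply: eq_card => x; rewrite !inE.
  by have := mm_le g (ltn_ord x); have := ltn_ord x; lia.
have := @leqif_sum _ xpredT (fun q : 'I_N => #|[set x : 'I_N | mm s x == q]| == s q)
  (fun q : 'I_N => #|[set x : 'I_N | mm s x == q]|) (fun q : 'I_N => s q).
case=> [q _|_]; first by apply: leqif_eq; apply: fiber_le.
by rewrite hsum eqxx => /esym/forallP/(_ (Ordinal hp))/eqP.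
Qed.

Lemma nest N s x y : goodS N s -> x < N -> y < N -> mm s x != x ->
  mm s x < y < x -> mm s y != mm s x -> mm s x < mm s y.
Proof.
move=> g hx hy nx /andP[py yx] ny.
have sx : s x = 0 by apply/eqP; apply: contraR nx; rewrite -lt0n /mm => ->.
case: (mm_down g hx sx) => a b c.
case: (posnP (s y)) => sy; last by rewrite {2}/mm sy.
case: (mm_down g hy sy) => a' b' c'.
case: (ltngtP (mm s x) (mm s y)) => // e; last by rewrite e eqxx in ny.
have h1 : hh s y <= hh s (mm s x) by apply: c'; rewrite e py.
have h2 : hh s x <= hh s y by apply: c; rewrite py yx.
lia.
Qed.

Definition Psi N (s : nat -> nat) : {set {set 'I_N}} :=
  preim_partition (fun x : 'I_N => mm s x) [set: 'I_N].

Lemma Psi_part N s : partition (Psi N s) [set: 'I_N].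
Proof. exact: preim_partitionP. Qed.

Lemma Psi_pblock N s (x y : 'I_N) : (y \in pblock (Psi N s) x) = (mm s x == mm s y).
Proof.
apply: (@pblock_equivalence_partition _ (fun x y : 'I_N => mm s x == mm s y)) => //.
by move=> a b c _ _ _; split => // /eqP ->.
Qed.

Lemma mn_Psi N s (x : 'I_N) : goodS N s -> (mn (Psi N s) x : nat) = mm s x.
Proof.
move=> g.
have hlt : mm s x < N by apply: leq_ltn_trans (mm_le g (ltn_ord x)) (ltn_ord x).
rewrite (@mn_char _ _ x (Ordinal hlt)) ?Psi_part //.
  by rewrite Psi_pblock /= (mm_idem g (ltn_ord x)).
move=> y; rewrite Psi_pblock /= => /eqP e.
by rewrite e; apply: mm_le g (ltn_ord y).
Qed.

Lemma Psi_NC N s : goodS N s -> noncrossing (Psi N s).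
Proof.
move=> g; apply/forall_inP => B1 hB1; apply/forall_inP => B2 hB2; apply/implyP => ne.
apply/forallP => a; apply/forallP => b; apply/forallP => c; apply/forallP => d.
apply/negP => /and5P [ab bc cd aB1 /and3P[cB1 bB2 dB2]].
have hP := Psi_part N s.
have e1 : mm s a = mm s c.
  by apply/eqP; rewrite -Psi_pblock (pblock_of_mem hP hB1 aB1).
have e2 : mm s b = mm s d.
  by apply/eqP; rewrite -Psi_pblock (pblock_of_mem hP hB2 bB2).
have e3 : mm s a != mm s b.
  apply: contra ne; rewrite -Psi_pblock (pblock_of_mem hP hB1 aB1) => bB1.
  by rewrite -(pblock_of_mem hP hB1 bB1) (pblock_of_mem hP hB2 bB2).
have la := mm_le g (ltn_ord a); have lb := mm_le g (ltn_ord b).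
have h1 : mm s c < mm s b.
  apply: (nest g (ltn_ord c) (ltn_ord b)).
  - by rewrite -e1; apply/eqP => e; lia.
  - by rewrite -e1; apply/andP; split; lia.
  - by rewrite -e1 eq_sym.
have h2 : mm s d < mm s c.
  apply: (nest g (ltn_ord d) (ltn_ord c)).
  - by rewrite -e2; apply/eqP => e; lia.
  - by rewrite -e2; apply/andP; split; lia.
  - by rewrite -e2 -e1.
lia.
Qed.

Definition sP N (P : {set {set 'I_N}}) (j : nat) : nat := #|[set x : 'I_N | (mn P x : nat) == j]|.

Lemma sP_Psi N s j : goodS N s -> sP (Psi N s) j = s j.
Proof.
move=> g; have [g0 _ _] := g; rewrite /sP.
have -> : [set x : 'I_N | (mn (Psi N s) x : nat) == j] = [set x : 'I_N | mm s x == j].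
  by apply/setP => x; rewrite !inE mn_Psi.
case: (ltnP j N) => hj; first exact: fiber_eq.
rewrite g0 //; apply/eqP; rewrite cards_eq0; apply/eqP/setP => x; rewrite !inE.
apply/negbTE/eqP => e; have := mm_le g (ltn_ord x); have := ltn_ord x; lia.
Qed.

Lemma Psi_block_size N s B : goodS N s -> B \in Psi N s ->
  exists2 x : 'I_N, #|B| = s (mm s x) & B = pblock (Psi N s) x.
Proof.
move=> g hB.
have /set0Pn [x xB] : B != set0.
  by apply/negP => /eqP e; case/and3P: (Psi_part N s) => _ _; rewrite -e hB.
have eB := pblock_of_mem (Psi_part N s) hB xB.
exists x => //; rewrite -eB.
have hlt : mm s x < N by apply: leq_ltn_trans (mm_le g (ltn_ord x)) (ltn_ord x).
rewrite -(fiber_eq g hlt); apply: eq_card => y; rewrite !inE Psi_pblock eq_sym.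
by [].
Qed.

Lemma NC_cross N (P : {set {set 'I_N}}) (a b c d : 'I_N) :
  partition P [set: 'I_N] -> noncrossing P -> a < b -> b < c -> c < d ->
  pblock P a = pblock P c -> pblock P b = pblock P d -> pblock P a != pblock P b -> False.
Proof.
move=> hP hNC ab bc cd eac ebd ne.
have pa := pblock_mem (part_cover a hP); have pb := pblock_mem (part_cover b hP).
move: hNC => /forall_inP /(_ _ pa) /forall_inP /(_ _ pb) /implyP /(_ ne).
move=> /forallP /(_ a) /forallP /(_ b) /forallP /(_ c) /forallP /(_ d) /negP; apply.
rewrite ab bc cd !pblock_self // eac pblock_self // ebd pblock_self //.
Qed.

Lemma sig_sP N (P : {set {set 'I_N}}) J : sig (sP P) J = #|[set x : 'I_N | mn P x < J]|.
Proof. exact: (sum_cnt (fun x : 'I_N => (mn P x : nat))). Qed.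

Lemma card_lt N j : j <= N -> #|[set x : 'I_N | x < j]| = j.
Proof.
move=> hj; rewrite (card_sum (fun x : 'I_N => (x : nat) < j)).
rewrite -big_mkcond /= -(big_ord_widen _ (fun _ => 1) hj) /=.
by rewrite sum_nat_const card_ord muln1.
Qed.

Lemma hh_sP N (P : {set {set 'I_N}}) j : partition P [set: 'I_N] -> j <= N ->
  hh (sP P) j = #|[set x : 'I_N | (j <= x) && (mn P x < j)]|.
Proof.
move=> hP hj; rewrite /hh sig_sP -{2}(card_lt hj).
rewrite (card_sum (fun x : 'I_N => (mn P x : nat) < j)) (card_sum (fun x : 'I_N => (x:nat) < j)).
rewrite (card_sum (fun x : 'I_N => (j <= x) && (mn P x < j))).
have -> : \sum_(x : 'I_N) ((mn P x < j) : nat) = \sum_(x : 'I_N) (((x : nat) < j) : nat) + \sum_(x : 'I_N) (((j <= x) && (mn P x < j)) : nat).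
  rewrite -big_split /=; apply: eq_bigr => x _.
  have := mn_lex x hP; case: (ltnP x j) => h /= hm.
    by rewrite (leq_ltn_trans hm h).
  by rewrite add0n.
by rewrite addKn.
Qed.

Lemma good_sP N (P : {set {set 'I_N}}) : partition P [set: 'I_N] -> goodS N (sP P).
Proof.
move=> hP; split.
- move=> j hj; apply/eqP; rewrite cards_eq0; apply/eqP/setP => x; rewrite !inE.
  apply/negbTE/eqP => e; have := ltn_ord (mn P x); lia.
- move=> j hj; rewrite sig_sP -{1}(card_lt hj); apply: subset_leq_card.
  apply/subsetP => x; rewrite !inE => h; exact: leq_ltn_trans (mn_lex x hP) h.
- rewrite sig_sP -[RHS](card_ord N) -cardsT; apply: eq_card => x; rewrite !inE.
  by have := ltn_ord (mn P x) => ->.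
Qed.

Lemma mm_sP N (P : {set {set 'I_N}}) (x : 'I_N) :
  partition P [set: 'I_N] -> noncrossing P -> mm (sP P) x = mn P x.
Proof.
move=> hP hNC.
have cross := fun a b c d => @NC_cross N P a b c d hP hNC.
have bmn := fun y => pblock_mn y hP.
have mnidem := fun y => mn_idem y hP.
case: (eqVneq (mn P x) x) => ex.
  rewrite /mm ex; have -> : 0 < sP P x = true.
    by rewrite /sP lt0n cards_eq0; apply/set0Pn; exists x; rewrite inE ex.
  by [].
set p := mn P x.
have hpx : p < x.
  have hne : (p : nat) != x by apply: contra ex => /eqP e; apply/eqP/val_inj.
  by rewrite ltn_neqAle hne mn_lex.
have sx : sP P x = 0.
  apply/eqP; rewrite cards_eq0; apply/eqP/setP => y; rewrite !inE.
  apply/negbTE/eqP => e.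
  have e' : mn P y = x by apply: val_inj.
  by move: ex; rewrite -e' mnidem eqxx.
rewrite /mm sx /=.
have hlx := ltn_ord x; have hlp := ltn_ord p.
have ne_pb : forall y : 'I_N, mn P y != p -> pblock P (mn P y) != pblock P p.
  move=> y; apply: contra => /eqP e.
  have := mn_eq (mn P y) p hP; rewrite e eqxx mnidem /p mnidem; by [].
have epx : pblock P p = pblock P x by apply: bmn.
apply: lastlt_char => //.
- rewrite (hh_sP hP (ltnW hlp)) (hh_sP hP (ltnW hlx)); apply: proper_card.
  apply/properP; split.
    apply/subsetP => y; rewrite !inE => /andP[py my].
    have hyx : x <= y.
      case: (leqP x y) => // yx; exfalso.
      have ny : y != p.
        by apply/eqP => e; move: my; rewrite e mnidem ltnn.
      have py' : p < y.
        rewrite ltn_neqAle py andbT; apply: contra ny => /eqP e.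
        by apply/eqP; apply: val_inj; rewrite /= e.
      apply: (cross (mn P y) p y x) => //.
      apply: ne_pb; apply/eqP => e; by rewrite e ltnn in my.
    by rewrite hyx /= (ltn_trans my hpx).
  exists x; rewrite !inE; first by apply/andP; split.
  by rewrite -/p ltnn andbF.
- move=> q /andP[pq qx].
  rewrite (hh_sP hP (ltnW hlx)) (hh_sP hP (ltnW (ltn_trans qx hlx))).
  apply: subset_leq_card; apply/subsetP => y; rewrite !inE => /andP[xy my].
  rewrite (leq_trans (ltnW qx) xy) /=.
  case: (ltnP (mn P y) q) => // qm; exfalso.
  have nyx : y != x.
    by apply/eqP => e; move: qm; rewrite e -/p; lia.
  have xy' : x < y.
    rewrite ltn_neqAle xy andbT; apply: contra nyx => /eqP e.
    by apply/eqP; apply: val_inj; rewrite /= e.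
  apply: (cross p (mn P y) x y) => //; first lia.
  by rewrite eq_sym; apply: ne_pb; apply/eqP => e; move: qm; rewrite e; lia.
Qed.

Lemma preim_eq (T : finType) (rT1 rT2 : eqType) (f : T -> rT1) (g : T -> rT2) D :
  (forall x y, (f x == f y) = (g x == g y)) -> preim_partition f D = preim_partition g D.
Proof.
move=> H; rewrite /preim_partition /equivalence_partition; apply: eq_imset => x.
by apply/setP => y; rewrite !inE H.
Qed.

Lemma flast_ext h h' v i : h =1 h' -> flast h v i = flast h' v i.
Proof. by move=> H; elim: i => //= i ->; rewrite H. Qed.

Lemma mm_ext s s' x : (forall j, s j = s' j) -> mm s x = mm s' x.
Proof.
move=> H.
have Hh : hh s =1 hh s'.
  by move=> j; rewrite /hh /sig; congr subn; apply: eq_bigr => i _; apply: H.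
rewrite /mm H; case: (0 < s' x) => //.
by rewrite /lastlt Hh; apply: flast_ext.
Qed.

Lemma Psi_ext N s s' : (forall j, s j = s' j) -> Psi N s = Psi N s'.
Proof. by move=> H; apply: preim_eq => x y; rewrite !(mm_ext _ H). Qed.

Lemma Psi_sP N (P : {set {set 'I_N}}) :
  partition P [set: 'I_N] -> noncrossing P -> Psi N (sP P) = P.
Proof.
move=> hP hNC; rewrite /Psi -[RHS](preim_partition_pblock hP).
apply: preim_eq => x y; rewrite !mm_sP // val_eqE mn_eq //.
Qed.

Lemma pre_eq k N B (c : {ffun 'I_N.+1 -> 'I_B}) m : m <= N.+1 ->
  pre k c m = \sum_(i < m) k * c (inord i).
Proof.
move=> hm; rewrite /pre (eq_bigr (fun i : 'I_N.+1 => k * c (inord i))); last first.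
  by move=> i _; rewrite inord_val.
by rewrite -(big_ord_widen _ (fun i => k * c (inord i)) hm).
Qed.

Definition s_of k n (c : {ffun 'I_(k*n).+1 -> 'I_n.+1}) (j : nat) : nat :=
  if j < k * n then k * c (inord j) else 0.

Definition Phi k n (P : {set {set 'I_(k*n)}}) : {ffun 'I_(k*n).+1 -> 'I_n.+1} :=
  [ffun i : 'I_(k*n).+1 => inord (sP P i %/ k)].

Lemma sig_s_of k n (c : {ffun 'I_(k*n).+1 -> 'I_n.+1}) j : j <= k * n ->
  sig (s_of c) j = pre k c j.
Proof.
move=> hj; rewrite pre_eq; last lia.
by apply: eq_bigr => i _; rewrite /s_of (leq_trans (ltn_ord i) hj).
Qed.

Lemma good_G k n (c : {ffun 'I_(k*n).+1 -> 'I_n.+1}) : 0 < k -> inU n c -> goodc k c ->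
  goodS (k * n) (s_of c) /\ c ord_max = 0 :> nat.
Proof.
move=> hk /eqP hU /forallP hg.
have tot : pre k c (k*n).+1 = k * n.
  rewrite /pre (eq_bigr (fun i => k * c i)) // -big_distrr /=.
  transitivity (k * \sum_i (c i : nat)); last by rewrite hU.
  by congr muln; apply: eq_bigl => i; rewrite ltn_ord.
have hsplit : pre k c (k*n).+1 = pre k c (k*n) + k * c ord_max.
  rewrite !pre_eq // big_ord_recr /=; congr (_ + k * (c _ : nat)).
  by apply: val_inj; rewrite /= inordK.
have hN : pre k c (k * n) = k * n.
  have := hg ord_max; rewrite /=; lia.
have hmax : c ord_max = 0 :> nat.
  have : k * c ord_max = 0 by lia.
  by move/eqP; rewrite muln_eq0 (gtn_eqF hk) /= => /eqP.
split => //; split.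
- by move=> j hj; rewrite /s_of ltnNge hj.
- move=> j hj; rewrite sig_s_of //.
  have := hg (inord j); rewrite inordK //; lia.
- by rewrite sig_s_of.
Qed.

Definition PsiC k n (c : {ffun 'I_(k*n).+1 -> 'I_n.+1}) : {set {set 'I_(k*n)}} :=
  Psi (k * n) (s_of c).

Lemma NCkP k n P : P \in NCk k n ->
  [/\ partition P [set: 'I_(k*n)], noncrossing P & forall B, B \in P -> k %| #|B|].
Proof. by rewrite inE => /and3P [a b /forall_inP c]. Qed.

Lemma Phi_Psi k n (c : {ffun 'I_(k*n).+1 -> 'I_n.+1}) : 0 < k -> inU n c -> goodc k c ->
  Phi (PsiC c) = c.
Proof.
move=> hk hU hg; have [g hmax] := good_G hk hU hg.
apply/ffunP => i; rewrite ffunE /PsiC sP_Psi //; apply: val_inj => /=.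
rewrite /s_of; case: ifP => hi.
  rewrite mulKn // inordK; last by have := ltn_ord (c (inord i)); lia.

  by rewrite inord_val.
rewrite div0n inordK //.
have -> : i = ord_max by apply: val_inj => /=; have := ltn_ord i; move: hi; rewrite ltnS; lia.
by rewrite hmax.
Qed.

Lemma PsiC_NCk k n (c : {ffun 'I_(k*n).+1 -> 'I_n.+1}) : 0 < k -> inU n c -> goodc k c ->
  PsiC c \in NCk k n.
Proof.
move=> hk hU hg; have [g hmax] := good_G hk hU hg.
rewrite inE; apply/and3P; split; [exact: Psi_part | exact: Psi_NC |].
apply/forall_inP => B hB; case: (Psi_block_size g hB) => x -> _.
by rewrite /s_of; case: ifP => _; rewrite ?dvdn_mulr ?dvdn0.
Qed.

Lemma sP_dvd k n P j : P \in NCk k n -> k %| sP P j.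
Proof.
case/NCkP => hP _ hdiv; rewrite /sP.
case: (set_0Vmem [set x : 'I_(k*n) | (mn P x : nat) == j]) => [->|[x0]]; first by rewrite cards0 dvdn0.
rewrite inE => /eqP e0.
have -> : [set x : 'I_(k*n) | (mn P x : nat) == j] = pblock P x0.
  apply/setP => y; rewrite inE -e0 val_eqE mn_eq // pblock_eqE //.
  by rewrite -pblock_eqE // eq_sym pblock_eqE.
by apply: hdiv; apply: pblock_mem; apply: part_cover.
Qed.

Lemma sP_le N (P : {set {set 'I_N}}) j : sP P j <= N.
Proof. by rewrite /sP -[X in _ <= X](card_ord N) max_card. Qed.

Lemma Phi_val k n P (i : 'I_(k*n).+1) : 0 < k -> (Phi P i : nat) = sP P i %/ k.
Proof.
move=> hk; rewrite ffunE inordK // ltn_divLR //.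
have := sP_le P i; rewrite mulSn; lia.
Qed.

Lemma s_of_Phi k n P j : 0 < k -> P \in NCk k n -> s_of (Phi P) j = sP P j.
Proof.
move=> hk hNC; rewrite /s_of; case: ifP => hj.
  rewrite Phi_val //.
  by rewrite inordK ?ltnS 1?ltnW // mulnC divnK // (sP_dvd _ hNC).
case: (NCkP hNC) => hP _ _; case: (good_sP hP) => g0 _ _.
by rewrite g0 // leqNgt hj.
Qed.

Lemma Phi_G k n P : 0 < k -> P \in NCk k n -> inU n (Phi P) && goodc k (Phi P).
Proof.
move=> hk hNC; case: (NCkP hNC) => hP _ _; case: (good_sP hP) => g0 g1 g2.
have hsum m : m <= (k*n).+1 -> pre k (Phi P) m = sig (sP P) m.
  move=> hm; rewrite pre_eq //; apply: eq_bigr => i _.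
  rewrite Phi_val // inordK; last by apply: leq_trans (ltn_ord i) hm.
  by rewrite mulnC divnK // (sP_dvd _ hNC).
apply/andP; split.
  have e : k * \sum_i (Phi P i : nat) = k * n.
    rewrite big_distrr /=.
    transitivity (pre k (Phi P) (k*n).+1).
      by rewrite /pre; apply: eq_bigl => i; rewrite ltn_ord.
    by rewrite hsum // sigS g2 g0 ?addn0.
  by rewrite /inU -(eqn_pmul2l hk) e.
apply/forallP => m; rewrite hsum; last by apply: ltnW.
by apply: g1; rewrite -ltnS.
Qed.

Lemma Psi_Phi k n P : 0 < k -> P \in NCk k n -> PsiC (Phi P) = P.
Proof.
move=> hk hNC; case: (NCkP hNC) => hP hnc _.
by rewrite /PsiC (@Psi_ext _ _ (sP P) (fun j => s_of_Phi j hk hNC)) Psi_sP.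
Qed.

Lemma sP_min N (P : {set {set 'I_N}}) (x : 'I_N) : partition P [set: 'I_N] ->
  sP P x = if mn P x == x then #|pblock P x| else 0.
Proof.
move=> hP; rewrite /sP; case: ifP => e.
  apply: eq_card => y; rewrite inE -{1}(eqP e) val_eqE mn_eq //.
  by rewrite eq_sym pblock_eqE.
apply/eqP; rewrite cards_eq0; apply/eqP/setP => y; rewrite !inE.
apply/negbTE/eqP => e'; have e'' : mn P y = x by apply: val_inj.
by move: e; rewrite -e'' mn_idem // eqxx.
Qed.

Lemma nb_Phi k n t P : 0 < k -> 0 < t -> P \in NCk k n ->
  nblocks_of_size (t * k) P = wt t (Phi P).
Proof.
move=> hk ht hNC; case: (NCkP hNC) => hP _ _; case: (good_sP hP) => g0 _ _.
rewrite /wt big_ord_recr /= Phi_val // g0 // div0n.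
have -> : (0 == t) = false by case: t ht.
rewrite addn0.
have -> : \sum_(i < k * n) ((Phi P (widen_ord (leqnSn (k*n)) i) : nat) == t)
    = \sum_(x : 'I_(k*n)) (sP P x == t * k : nat).
  apply: eq_bigr => i _; rewrite Phi_val //=.
  have /dvdnP [q ->] := sP_dvd i hNC.
  by rewrite mulnK // eqn_pmul2r.
rewrite -(card_sum (fun x : 'I_(k*n) => sP P x == t * k)) /nblocks_of_size.
set A := [set x : 'I_(k*n) | sP P x == t * k].
have hA x : x \in A -> mn P x = x /\ #|pblock P x| = t * k.
  rewrite inE sP_min //; case: ifP => [/eqP e /eqP h //| _ /eqP h].
  by move: h; case: (t * k) (muln_gt0 t k) => //; rewrite ht hk.
have -> : [set B in P | #|B| == t * k] = [set pblock P x | x in A].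
  apply/setP => B; rewrite inE; apply/andP/imsetP.
    move=> [hB /eqP hs].
    have /set0Pn [x xB] : B != set0.
      by apply/eqP => e; move: hs; rewrite e cards0; case: (t * k) (muln_gt0 t k); rewrite ?ht ?hk.
    have eB := pblock_of_mem hP hB xB.
    exists (mn P x); last by rewrite pblock_mn.
    by rewrite inE sP_min // mn_idem // eqxx pblock_mn // eB hs.
  move=> [x /hA [_ hs] ->]; split; last by rewrite hs.
  by apply: pblock_mem; apply: part_cover.
rewrite card_in_imset // => x y /hA [ex _] /hA [ey _] e.
by rewrite -ex -ey; apply/eqP; rewrite mn_eq // e.
Qed.

Lemma bij_sum k n (F : {ffun 'I_(k*n).+1 -> 'I_n.+1} -> nat) : 0 < k ->
  \sum_(c | inU n c && goodc k c) F c = \sum_(P in NCk k n) F (Phi P).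
Proof.
move=> hk.
rewrite (reindex_onto (@Phi k n) (@PsiC k n)) /=; last first.
  by move=> c /andP [hU hg]; apply: Phi_Psi.
apply: eq_bigl => P; apply/andP/idP.
  by move=> [/andP [hU hg] /eqP <-]; apply: PsiC_NCk.
by move=> hNC; rewrite Phi_G // Psi_Phi.
Qed.

Lemma count_NCk k n : 0 < k -> (k*n).+1 * #|NCk k n| = 'C(n + k * n, n).
Proof.
move=> hk.
rewrite -sum1_card -(bij_sum (fun _ => 1)) //.
rewrite (avg_lemma (F := fun _ => 1)) // -(@compE n.+1 (k*n) n) //.
by rewrite /comp big_mkcond.
Qed.

Lemma count_blocks k n t : 0 < k -> 0 < t ->
  \sum_(P in NCk k n) nblocks_of_size (t * k) P =
  if t <= n then comp n.+1 (k * n) (n - t) else 0.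
Proof.
move=> hk ht.
rewrite (eq_bigr (fun P => wt t (Phi P))); last by move=> P hP; apply: nb_Phi.
rewrite -(bij_sum (fun c => wt t c)) // -sum_ord0.
apply/eqP; rewrite -(eqn_pmul2l (ltn0Sn (k * n))) -sum_wt; apply/eqP.
by apply: avg_lemma => // r c; apply: wt_rot.
Qed.

Unset Implicit Arguments.
Local Open Scope ring_scope.

Theorem corollary2p2 (k n t : nat) (hk : (0 < k)%N) (hn : (0 < n)%N)
    (ht : (0 < t)%N) :
  (\sum_(P in NCk k n) (nblocks_of_size (t * k) P)%:R) / (#|NCk k n|%:R : rat)
  = ((n * k + 1)%:R * (binomZ ((n * (k + 1))%:Z - t%:Z - 1) ((n * k)%:Z - 1))%:R)
    / ('C((k + 1) * n, n))%:R.
Proof.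
have hA := count_NCk n hk; have hS := count_blocks n hk ht.
rewrite -natr_sum.
set A := #|NCk k n| in hA *.
set S := (\sum_(P in NCk k n) nblocks_of_size (t * k) P)%N in hS *.
have hkn : (0 < k * n)%N by rewrite muln_gt0 hk hn.
have hbin : binomZ ((n * (k + 1))%:Z - t%:Z - 1) ((n * k)%:Z - 1) = S.
  rewrite hS /binomZ; case: (leqP t n) => htn.
    have ea : (n * (k + 1))%:Z - t%:Z - 1 = (n * k + n - t - 1)%N%:Z by lia.
    have eb : (n * k)%:Z - 1 = (n * k - 1)%N%:Z by lia.
    rewrite ea eb lez_nat.
    have -> : (0 <= (n * k - 1)%N%:Z) = true by [].
    rewrite leq_sub2r ?leq_sub2l //=; last by lia.
    have e1 : (k * n = (k * n).-1.+1)%N by lia.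
    rewrite e1 compE; last lia.
    rewrite -[LHS]bin_sub; last lia.
    congr 'C(_, _); lia.
  have -> : (((n * k)%:Z - 1) <= (n * (k + 1))%:Z - t%:Z - 1) = false.
    apply/negbTE; rewrite -ltNge; lia.
  by rewrite andbF.
have hC : 'C((k + 1) * n, n) = ((k * n).+1 * A)%N.
  by rewrite hA; congr 'C(_, _); lia.
rewrite hbin hC natrM.
have hA0 : A%:R != 0 :> rat.
  rewrite pnatr_eq0 -lt0n; move: (bin_gt0 (n + k * n) n); rewrite -hA leq_addr muln_gt0.
  by case/andP.
have -> : (n * k + 1 = (k * n).+1)%N by lia.
  field; rewrite hA0 /=.
  have -> : (1 + k%:R * n%:R : rat) = ((k * n).+1)%:R by rewrite -natrM -addn1 natrD addrC.
  by rewrite pnatr_eq0.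
Qed.
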